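(* The Schubert cell $S_{w_0,z_1}$ is the disjoint union of exactly four $G$-orbits of points $(P,Pw_0,Pz_1n)$: $n=n(1,1,0)$, dimension $8$, trivial stabilizer; $n=n(1,0,0)$, dimension $7$, stabilizer $\{d(a,a,1/a^2):a\in\mathbb{R}^\times\}$; $n=n(0,1,0)$, dimension $7$, stabilizer $\{d(a,1/a^2,a):a\in\mathbb{R}^\times\}$; $n=n(0,0,0)$, dimension $6$, stabilizer $D$.
   Context: $G=\mathrm{SL}_3(\mathbb{R})$, $P$ the upper triangular matrices in $G$, $D$ the diagonal matrices in $G$; $G$ acts on $X=(P\backslash G)^3$ by right multiplication in each coordinate. $n(x,y,z)=\begin{pmatrix}1&x&y\\0&1&z\\0&0&1\end{pmatrix}$, $d(a,b,c)=\operatorname{diag}(a,b,c)$. $w_0=\begin{pmatrix}0&0&-1\\0&-1&0\\-1&0&0\end{pmatrix}$, $z_1=\begin{pmatrix}0&-1&0\\0&0&-1\\1&0&0\end{pmatrix}$. $S_{v,w}=\big(\{P\}\times P\backslash PvP\times P\backslash PwP\big)\cdot G$. The stabilizer of $(P,Pv,Pwn)$ is $P\cap v^{-1}Pv\cap (wn)^{-1}P(wn)$. *)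

(* Defs.v *)
From HB Require Import structures.
From mathcomp Require Import all_boot all_order all_algebra.
From mathcomp Require Import all_classical all_reals all_analysis.
Set Implicit Arguments. Unset Strict Implicit. Unset Printing Implicit Defensive.
Import Order.TTheory GRing.Theory Num.Theory.
Import numFieldNormedType.Exports.
Local Open Scope ring_scope.

Section Defs.
Variable R : realType.
Notation M3 := 'M[R]_3.

Definition inG (g : M3) : Prop := \det g = 1.
Definition inP (g : M3) : Prop :=
  inG g /\ forall i j : 'I_3, (j < i)%N -> g i j = 0.
Definition inD (g : M3) : Prop :=
  inG g /\ forall i j : 'I_3, i != j -> g i j = 0.

(* the point P g of P\G is represented by g; P g = P g' *)
Definition same_coset (g g' : M3) : Prop := exists p, inP p /\ g' = p *m g.

(* points of X = (P\G)^3, represented by triples of representatives *)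
Definition triple := (M3 * M3 * M3)%type.
Definition t1 (x : triple) := x.1.1.
Definition t2 (x : triple) := x.1.2.
Definition t3 (x : triple) := x.2.

Definition same_point (x y : triple) : Prop :=
  [/\ same_coset (t1 x) (t1 y), same_coset (t2 x) (t2 y) & same_coset (t3 x) (t3 y)].

Definition Gact (x : triple) (h : M3) : triple :=
  (t1 x *m h, t2 x *m h, t3 x *m h).

Definition Gorbit (x : triple) (y : triple) : Prop :=
  exists h, inG h /\ same_point (Gact x h) y.

Definition Gstab (x : triple) (h : M3) : Prop :=
  inG h /\ same_point (Gact x h) x.

(* S_{v,w} = ({P} x P\PvP x P\PwP) . G *)
Definition Schubert (v w : M3) (y : triple) : Prop :=
  exists h p q, [/\ inG h, inP p, inP q &
    same_point (h, v *m p *m h, w *m q *m h) y].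

Definition nmat (x y z : R) : M3 :=
  \matrix_(i < 3, j < 3)
    nth (0 : R) (nth [::] [:: [:: 1; x; y]; [:: 0; 1; z]; [:: 0; 0; 1]] i) j.
Definition dmat (a b c : R) : M3 :=
  \matrix_(i < 3, j < 3)
    nth (0 : R) (nth [::] [:: [:: a; 0; 0]; [:: 0; b; 0]; [:: 0; 0; c]] i) j.
Definition w0 : M3 :=
  \matrix_(i < 3, j < 3)
    nth (0 : R) (nth [::] [:: [:: 0; 0; -1]; [:: 0; -1; 0]; [:: -1; 0; 0]] i) j.
Definition z1 : M3 :=
  \matrix_(i < 3, j < 3)
    nth (0 : R) (nth [::] [:: [:: 0; -1; 0]; [:: 0; 0; -1]; [:: 1; 0; 0]] i) j.

Definition pt (v w n : M3) : triple := (1%:M, v, w *m n).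

Definition tangent_space (H : M3 -> Prop) (X : M3) : Prop :=
  exists c : R -> M3, [/\ c 0 = 1%:M, (\forall t \near 0, H (c t)),
    derivable c 0 1 & 'D_1 c 0 = X].

Definition subspace_dim (T : M3 -> Prop) (k : nat) : Prop :=
  exists B : 'M[R]_(k, 3 * 3), row_free B /\
    forall X, T X <-> (mxvec X <= B)%MS.

(* the dimension of the G-orbit of x (as the homogeneous manifold
   G / Stab(x)) is d : dim G - dim Stab(x) = 8 - dim Lie(Stab(x)) = d *)
Definition orbit_dim (x : triple) (d : nat) : Prop :=
  (d <= 8)%N /\ subspace_dim (tangent_space (Gstab x)) (8 - d).

End Defs.

(* Main.v *)
Require Import Defs.
From HB Require Import structures.
From mathcomp Require Import all_boot all_order all_algebra.
From mathcomp Require Import all_classical all_reals all_analysis.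
From mathcomp Require Import ring lra.
Import Order.TTheory GRing.Theory Num.Theory.
Local Open Scope ring_scope.

Section Mk.
Set Implicit Arguments. Unset Strict Implicit.
Variable R : realType.
Notation M3 := 'M[R]_3.
Definition mk (a b c d e f g h i : R) : M3 :=
  \matrix_(i0 < 3, j < 3)
    nth (0 : R) (nth [::] [:: [:: a; b; c]; [:: d; e; f]; [:: g; h; i]] i0) j.
Definition o0 : 'I_3 := @Ordinal 3 0 isT.
Definition o1 : 'I_3 := @Ordinal 3 1 isT.
Definition o2 : 'I_3 := @Ordinal 3 2 isT.

Lemma mk_eta (M : M3) : M = mk (M o0 o0) (M o0 o1) (M o0 o2) (M o1 o0) (M o1 o1) (M o1 o2)
  (M o2 o0) (M o2 o1) (M o2 o2).
Proof.
apply/matrixP=> i j; rewrite !mxE.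
case: i => [[|[|[|i]]] Hi] //; case: j => [[|[|[|j]]] Hj] //=;
  by congr (M _ _); apply: val_inj.
Qed.

Lemma mk_mul a b c d e f g h i a' b' c' d' e' f' g' h' i' :
  mk a b c d e f g h i *m mk a' b' c' d' e' f' g' h' i' =
  mk (a*a' + b*d' + c*g') (a*b' + b*e' + c*h') (a*c' + b*f' + c*i')
     (d*a' + e*d' + f*g') (d*b' + e*e' + f*h') (d*c' + e*f' + f*i')
     (g*a' + h*d' + i*g') (g*b' + h*e' + i*h') (g*c' + h*f' + i*i').
Proof.
apply/matrixP=> r s; rewrite !mxE !big_ord_recr big_ord0 /= add0r !mxE.
by case: r => [[|[|[|r]]] Hr] //; case: s => [[|[|[|s]]] Hs] //=.
Qed.

Lemma mk_eq a b c d e f g h i a' b' c' d' e' f' g' h' i' :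
  a = a' -> b = b' -> c = c' -> d = d' -> e = e' -> f = f' -> g = g' -> h = h' -> i = i' ->
  mk a b c d e f g h i = mk a' b' c' d' e' f' g' h' i'.
Proof. by move=> -> -> -> -> -> -> -> -> ->. Qed.

Lemma mk_inj a b c d e f g h i a' b' c' d' e' f' g' h' i' :
  mk a b c d e f g h i = mk a' b' c' d' e' f' g' h' i' ->
  [/\ a = a', b = b', c = c', d = d' & e = e'] /\ [/\ f = f', g = g', h = h' & i = i'].
Proof.
move=> E.
have F := fun r s => congr1 (fun M : M3 => M r s) E.
move: (F o0 o0) (F o0 o1) (F o0 o2) (F o1 o0) (F o1 o1) (F o1 o2) (F o2 o0) (F o2 o1) (F o2 o2).
rewrite !mxE /= => *; by do !split.
Qed.

Lemma det_mk a b c d e f g h i :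
  \det (mk a b c d e f g h i) = a*e*i - a*f*h - b*d*i + b*f*g + c*d*h - c*e*g.
Proof.
rewrite (expand_det_row _ o0) !big_ord_recr big_ord0 /= add0r.
rewrite /cofactor !mxE /=.
rewrite !(expand_det_row _ ord0) !big_ord_recr !big_ord0 /= !add0r.
rewrite /cofactor !mxE /= !det_mx11 !mxE /=.
rewrite /=. ring.
Qed.

Lemma mk1 : (1%:M : M3) = mk 1 0 0 0 1 0 0 0 1.
Proof. by apply/matrixP=> r s; rewrite !mxE; case: r => [[|[|[|r]]] Hr] //; case: s => [[|[|[|s]]] Hs]. Qed.

Lemma nmatE x y z : nmat x y z = mk 1 x y 0 1 z 0 0 1 :> M3.
Proof. by []. Qed.
Lemma dmatE x y z : dmat x y z = mk x 0 0 0 y 0 0 0 z :> M3.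
Proof. by []. Qed.
Lemma w0E : w0 R = mk 0 0 (-1) 0 (-1) 0 (-1) 0 0.
Proof. by []. Qed.
Lemma z1E : z1 R = mk 0 (-1) 0 0 0 (-1) 1 0 0.
Proof. by []. Qed.

Lemma mk_surj (M : M3) : exists a b c d e f g h i, M = mk a b c d e f g h i.
Proof. by do 9 eexists; exact: mk_eta. Qed.

Lemma nz3 {a b c : R} : a * b * c = 1 -> [/\ a != 0, b != 0 & c != 0].
Proof.
move=> H; split; apply/eqP=> E; move: H; rewrite E ?mul0r ?mulr0 ?mul0r;
  by move/eqP; rewrite eq_sym oner_eq0.
Qed.

Lemma inP_mk a b c d e f g h i :
  inP (mk a b c d e f g h i) <-> [/\ d = 0, g = 0, h = 0 & a * e * i = 1].
Proof.
rewrite /inP /inG det_mk; split.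
  move=> [D L].
  have := L o1 o0 isT; have := L o2 o0 isT; have := L o2 o1 isT.
  rewrite !mxE /= => H1 H2 H3; split => //.
  by rewrite -D H1 H2 H3; ring.
move=> [-> -> -> H]; split; first by rewrite -H; ring.
move=> r s; rewrite !mxE.
by case: r => [[|[|[|r]]] Hr] //; case: s => [[|[|[|s]]] Hs].
Qed.

Lemma inG_mk a b c d e f g h i :
  inG (mk a b c d e f g h i) <-> a*e*i - a*f*h - b*d*i + b*f*g + c*d*h - c*e*g = 1.
Proof. by rewrite /inG det_mk. Qed.

Lemma P_inv {p : M3} : inP p -> exists q, inP q /\ q *m p = 1%:M.
Proof.
case: (mk_surj p) => a [b [c [d [e [f [g [h [i ->]]]]]]]].
move=> /inP_mk [-> -> -> H]; have [a0 e0 i0] := nz3 H.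
exists (mk (1/a) (-b/(a*e)) ((b*f - c*e)/(a*e*i)) 0 (1/e) (-f/(e*i)) 0 0 (1/i)).
split; first by apply/inP_mk; split => //; rewrite !div1r -!invfM H invr1.
rewrite mk_mul mk1; apply: mk_eq; field; by rewrite ?a0 ?e0 ?i0 ?mulf_neq0.
Qed.

Lemma P_mul {p q : M3} : inP p -> inP q -> inP (p *m q).
Proof.
case: (mk_surj p) => a [b [c [d [e [f [g [h [i ->]]]]]]]].
case: (mk_surj q) => a' [b' [c' [d' [e' [f' [g' [h' [i' ->]]]]]]]].
move=> /inP_mk [-> -> -> H] /inP_mk [-> -> -> H'].
rewrite mk_mul; apply/inP_mk; split; try ring.
by rewrite -[RHS](mulr1 1) -{1}H -H'; ring.
Qed.

Lemma P1 : inP (1%:M : M3).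
Proof. by rewrite mk1; apply/inP_mk; split => //; ring. Qed.

Lemma sc_refl (g : M3) : same_coset g g.
Proof. by exists 1%:M; split; [exact: P1 | rewrite mul1mx]. Qed.

Lemma sc_sym (g g' : M3) : same_coset g g' -> same_coset g' g.
Proof.
move=> [p [Pp ->]]; have [q [Pq qp]] := P_inv Pp.
by exists q; split => //; rewrite mulmxA qp mul1mx.
Qed.

Lemma sc_trans (g g' g'' : M3) : same_coset g g' -> same_coset g' g'' -> same_coset g g''.
Proof.
move=> [p [Pp ->]] [p' [Pp' ->]].
by exists (p' *m p); split; [exact: P_mul | rewrite mulmxA].
Qed.

Lemma sc_mulr (g g' h : M3) : same_coset g g' -> same_coset (g *m h) (g' *m h).
Proof. by move=> [p [Pp ->]]; exists p; split => //; rewrite mulmxA. Qed.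

Lemma sc_of (A B Binv : M3) : B *m Binv = 1%:M -> \det A = 1 -> \det B = 1 ->
  inP (A *m Binv) -> same_coset B A.
Proof.
move=> BB dA dB PA; exists (A *m Binv); split => //.
by rewrite -mulmxA (mulmx1C BB) mulmx1.
Qed.

Lemma sp_refl (x : triple R) : same_point x x.
Proof. by split; exact: sc_refl. Qed.
Lemma sp_sym (x y : triple R) : same_point x y -> same_point y x.
Proof. by case=> *; split; exact: sc_sym. Qed.
Lemma sp_trans (x y z : triple R) : same_point x y -> same_point y z -> same_point x z.
Proof. by case=> ? ? ? [] *; split; apply: sc_trans; eassumption. Qed.
Lemma sp_mulr (x y : triple R) (h : M3) : same_point x y -> same_point (Gact x h) (Gact y h).
Proof. by case=> *; split; apply: sc_mulr. Qed.
Lemma Gact_comp (x : triple R) (g h : M3) : Gact (Gact x g) h = Gact x (g *m h).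
Proof. by rewrite /Gact /t1 /t2 /t3 /= !mulmxA. Qed.
Lemma Gact1 (x : triple R) : Gact x 1%:M = x.
Proof. by case: x => [[a b] c]; rewrite /Gact /t1 /t2 /t3 /= !mulmx1. Qed.

Lemma cbrt (t : R) : exists r : R, r ^+ 3 = t.
Proof.
have H (s : R) : 0 <= s -> (s `^ (3^-1)) ^+ 3 = s.
  move=> s0; rewrite -powR_mulrn ?powR_ge0 // -powRrM mulVf ?powRr1 //.

have [t0|t0] := leP 0 t; first by exists (t `^ (3^-1)); rewrite H.
exists (- ((- t) `^ (3^-1))); rewrite exprNn H ?oppr_ge0 ?ltW //.
by rewrite -signr_odd /= mulN1r opprK.
Qed.
End Mk.

Ltac nz := repeat match goal with |- is_true (_ && _) => apply/andP; split end;
  rewrite ?mulf_neq0 ?invr_neq0 ?oppr_eq0 //.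
Ltac fld := field; nz.

Section Key.
Set Implicit Arguments. Unset Strict Implicit.
Variable R : realType.
Notation M3 := 'M[R]_3.

Lemma key_fwd (x y x' y' : R) (g : M3) : inG g ->
  same_point (Gact (pt (w0 R) (z1 R) (nmat x y 0)) g) (pt (w0 R) (z1 R) (nmat x' y' 0)) ->
  exists a b c, [/\ a*b*c = 1, g = mk a 0 0 0 b 0 0 0 c, a*x' = b*x & a*y' = c*y].
Proof.
case: (mk_surj g) => a [b [c [d [e [f [gg [h [i ->]]]]]]]].
rewrite /Gact /pt /t1 /t2 /t3 /= => /inG_mk G [S1 S2 S3].
have [Hd Hg Hh] : [/\ d = 0, gg = 0 & h = 0].
  move/sc_sym: S1 => [q1 [P1 E1]].
  case: (mk_surj q1) E1 P1 => ? [? [? [? [? [? [? [? [? ->]]]]]]]].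
  rewrite mul1mx mulmx1 => /mk_inj [[? ? ? ? ?] [? ? ? ?]] /inP_mk [? ? ? _].
  split; lra.
have [Hb Hc Hf] : [/\ b = 0, c = 0 & f = 0].
  move/sc_sym: S2 => [q2 [P2 E2]].
  case: (mk_surj q2) E2 P2 => ? [? [? [? [? [? [? [? [? ->]]]]]]]].
  rewrite w0E !mk_mul => /mk_inj [[? ? ? ? ?] [? ? ? ?]] /inP_mk [? ? ? _].
  split; lra.
subst b c d f gg h.
move: S3 => [p3 [P3 E3]].
case: (mk_surj p3) E3 P3 => ? [? [? [? [? [? [? [? [u ->]]]]]]]].
rewrite z1E !nmatE !mk_mul => /mk_inj [[E1 E2 E3 E4 E5] [E6 E7 E8 E9]] /inP_mk [F1 F2 F3 _].
rewrite F2 F3 in E7 E8 E9.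
rewrite !(mul0r, mulr0, add0r, addr0, mul1r, mulr1) in E7 E8 E9.
exists a, e, i; split => //.
- by rewrite -G; ring.
- by rewrite E8 -[in RHS](mul1r (e * x)) E7; ring.
- by rewrite E9 -[in RHS](mul1r (i * y)) E7; ring.
Qed.



Lemma key_bwd0 (x y a b : R) : a != 0 -> b != 0 ->
  same_point (Gact (pt (w0 R) (z1 R) (nmat x y 0)) (mk a 0 0 0 b 0 0 0 (a*b)^-1))
    (pt (w0 R) (z1 R) (nmat (b*x/a) ((a*b)^-1*y/a) 0)).
Proof.
move=> a0 b0; split; rewrite /Gact /pt /t1 /t2 /t3 /=.
- apply: (@sc_of _ _ _ (mk (1/a) 0 0 0 (1/b) 0 0 0 (a*b))).
  + by rewrite mk1 !mk_mul; apply: mk_eq; fld.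
  + by rewrite det1.
  + by rewrite mk1 !mk_mul det_mk; fld.
  + by rewrite mk1 !mk_mul; apply/inP_mk; split; fld.
- apply: (@sc_of _ _ _ (mk (1/a) 0 0 0 (1/b) 0 0 0 (a*b) *m w0 R)).
  + by rewrite w0E !mk_mul mk1; apply: mk_eq; fld.
  + by rewrite w0E det_mk; fld.
  + by rewrite w0E !mk_mul det_mk; fld.
  + by rewrite w0E !mk_mul; apply/inP_mk; split; fld.
- apply: (@sc_of _ _ _ (mk (1/a) 0 0 0 (1/b) 0 0 0 (a*b) *m nmat (-x) (-y) 0 *m
     mk 0 0 1 (-1) 0 0 0 (-1) 0)).
  + by rewrite z1E !nmatE !mk_mul mk1; apply: mk_eq; fld.
  + by rewrite z1E !nmatE !mk_mul det_mk; fld.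
  + by rewrite z1E !nmatE !mk_mul det_mk; fld.
  + by rewrite z1E !nmatE !mk_mul; apply/inP_mk; split; fld.
Qed.

Lemma sch0 (pa pb pc pd pe qa qb qc qd qe d1 d2 : R) :
  pa != 0 -> pd != 0 -> qa != 0 -> qd != 0 -> d1 != 0 -> d2 != 0 ->
  let X0 := qb/qa - pb/pa in
  let Y0 := (pb*pe)/(pa*pd) - pc/pa - qb*pe/(qa*pd) + qc/qa in
  let uinv := mk 1 (-pb/pa) ((pb/pa)*(pe/pd) - pc/pa) 0 1 (-pe/pd) 0 0 1 in
  let minv := uinv *m mk (1/d1) 0 0 0 (1/d2) 0 0 0 (d1*d2) in
  same_point
    (Gact (pt (w0 R) (z1 R) (nmat (X0*d1/d2) (Y0*d1*(d1*d2)) 0))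
          (mk d1 (d1*pb/pa) (d1*pc/pa) 0 d2 (d2*pe/pd) 0 0 (d1*d2)^-1))
    (1%:M, w0 R *m mk pa pb pc 0 pd pe 0 0 (pa*pd)^-1,
           z1 R *m mk qa qb qc 0 qd qe 0 0 (qa*qd)^-1).
Proof.
move=> pa0 pd0 qa0 qd0 d10 d20 X0 Y0 uinv minv.
rewrite /X0 /Y0 /minv /uinv; split; rewrite /Gact /pt /t1 /t2 /t3 /=.
- apply: (@sc_of _ _ _ minv).
  + by rewrite /minv /uinv mk1 !mk_mul; apply: mk_eq; fld.
  + by rewrite det1.
  + by rewrite mk1 !mk_mul det_mk; fld.
  + by rewrite /minv /uinv mk1 !mk_mul; apply/inP_mk; split; fld.
- apply: (@sc_of _ _ _ (minv *m w0 R)).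
  + by rewrite /minv /uinv w0E !mk_mul mk1; apply: mk_eq; fld.
  + by rewrite w0E !mk_mul det_mk; fld.
  + by rewrite w0E !mk_mul det_mk; fld.
  + by rewrite /minv /uinv w0E !mk_mul; apply/inP_mk; split; fld.
- apply: (@sc_of _ _ _ (minv *m nmat (-(X0*d1/d2)) (-(Y0*d1*(d1*d2))) 0 *m
     mk 0 0 1 (-1) 0 0 0 (-1) 0)).
  + by rewrite /minv /uinv /X0 /Y0 z1E !nmatE !mk_mul mk1; apply: mk_eq; fld.
  + by rewrite z1E !mk_mul det_mk; fld.
  + by rewrite z1E !nmatE !mk_mul det_mk; fld.
  + by rewrite /minv /uinv /X0 /Y0 z1E !nmatE !mk_mul; apply/inP_mk; split; fld.
Qed.

Lemma key_bwd (x y x' y' a b c : R) : a*b*c = 1 -> a*x' = b*x -> a*y' = c*y ->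
  same_point (Gact (pt (w0 R) (z1 R) (nmat x y 0)) (mk a 0 0 0 b 0 0 0 c))
    (pt (w0 R) (z1 R) (nmat x' y' 0)).
Proof.
move=> H Hx Hy; have [a0 b0 c0] := nz3 H.
have Ec : c = (a*b)^-1.
  by apply: (mulfI (mulf_neq0 a0 b0)); rewrite mulfV ?mulf_neq0 // mulrA.
have Ex : x' = b*x/a by rewrite -Hx; fld.
have Ey : y' = (a*b)^-1*y/a by rewrite -Ec -Hy; fld.
rewrite Ex Ey Ec; exact: key_bwd0.
Qed.

Lemma stab_iff (x y : R) (h : M3) : Gstab (pt (w0 R) (z1 R) (nmat x y 0)) h <->
  exists a b c, [/\ a*b*c = 1, h = mk a 0 0 0 b 0 0 0 c, a*x = b*x & a*y = c*y].
Proof.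
split; first by move=> [G S]; exact: key_fwd G S.
move=> [a [b [c [H -> Hx Hy]]]]; split; last exact: key_bwd.
by apply/inG_mk; apply: (eq_trans _ H); ring.
Qed.

Lemma P_nmat (x y : R) : inP (nmat x y 0).
Proof. by rewrite nmatE; apply/inP_mk; split => //; ring. Qed.

Lemma sch1 (pa pb pc pd pe qa qb qc qd qe d1 d2 X0 Y0 X Y : R) :
  pa != 0 -> pd != 0 -> qa != 0 -> qd != 0 -> d1 != 0 -> d2 != 0 ->
  X0 = qb/qa - pb/pa -> Y0 = (pb*pe)/(pa*pd) - pc/pa - qb*pe/(qa*pd) + qc/qa ->
  X = X0*d1/d2 -> Y = Y0*d1*(d1*d2) ->
  exists m, inP m /\ same_point (Gact (pt (w0 R) (z1 R) (nmat X Y 0)) m)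
    (1%:M, w0 R *m mk pa pb pc 0 pd pe 0 0 (pa*pd)^-1,
           z1 R *m mk qa qb qc 0 qd qe 0 0 (qa*qd)^-1).
Proof.
move=> pa0 pd0 qa0 qd0 d10 d20 -> -> -> ->.
eexists; split; last exact: sch0.
by apply/inP_mk; split => //; fld.
Qed.

Lemma sch_orbit (p q : M3) : inP p -> inP q -> exists X Y m,
  [/\ X = 0 \/ X = 1, Y = 0 \/ Y = 1, inP m &
    same_point (Gact (pt (w0 R) (z1 R) (nmat X Y 0)) m) (1%:M, w0 R *m p, z1 R *m q)].
Proof.
case: (mk_surj p) => pa [pb [pc [? [pd [pe [? [? [pf ->]]]]]]]].
case: (mk_surj q) => qa [qb [qc [? [qd [qe [? [? [qf ->]]]]]]]].
move=> /inP_mk [-> -> -> Hp] /inP_mk [-> -> -> Hq].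
have [pa0 pd0 _] := nz3 Hp; have [qa0 qd0 _] := nz3 Hq.
have -> : pf = (pa*pd)^-1.
  by apply: (mulfI (mulf_neq0 pa0 pd0)); rewrite mulfV ?mulf_neq0 // mulrA.
have -> : qf = (qa*qd)^-1.
  by apply: (mulfI (mulf_neq0 qa0 qd0)); rewrite mulfV ?mulf_neq0 // mulrA.
set X0 := qb/qa - pb/pa.
set Y0 := (pb*pe)/(pa*pd) - pc/pa - qb*pe/(qa*pd) + qc/qa.
have [X00|X00] := eqVneq X0 0; have [Y00|Y00] := eqVneq Y0 0.
- have [m [Pm S]] := @sch1 pa pb pc pd pe qa qb qc qd qe 1 1 X0 Y0 0 0
    pa0 pd0 qa0 qd0 (oner_neq0 _) (oner_neq0 _) erefl erefl
    ltac:(by rewrite X00; ring) ltac:(by rewrite Y00; ring).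
  by exists 0, 0, m; split => //; left.
- have [m [Pm S]] := @sch1 pa pb pc pd pe qa qb qc qd qe 1 (Y0^-1) X0 Y0 0 1
    pa0 pd0 qa0 qd0 (oner_neq0 _) (invr_neq0 Y00) erefl erefl
    ltac:(by rewrite X00; ring) ltac:(by fld).
  by exists 0, 1, m; split => //; [left | right].
- have [m [Pm S]] := @sch1 pa pb pc pd pe qa qb qc qd qe 1 X0 X0 Y0 1 0
    pa0 pd0 qa0 qd0 (oner_neq0 _) X00 erefl erefl
    ltac:(by fld) ltac:(by rewrite Y00; ring).
  by exists 1, 0, m; split => //; [right | left].
- have [r Er] := cbrt (X0 * Y0)^-1.
  have r0 : r != 0.
    apply/eqP => r0; move: Er; rewrite r0 expr0n /= => /eqP.
    by rewrite eq_sym invr_eq0 mulf_eq0 (negbTE X00) (negbTE Y00).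
  have EY : 1 = Y0 * r * (r * (X0 * r)).
    have -> : Y0 * r * (r * (X0 * r)) = (X0 * Y0) * r ^+ 3 by ring.
    by rewrite Er mulfV // mulf_neq0.
  have [m [Pm S]] := @sch1 pa pb pc pd pe qa qb qc qd qe r (X0 * r) X0 Y0 1 1
    pa0 pd0 qa0 qd0 r0 (mulf_neq0 X00 r0) erefl erefl
    ltac:(by fld) EY.
  by exists 1, 1, m; split => //; right.
Qed.
End Key.

Section C.
Set Implicit Arguments. Unset Strict Implicit.
Variable R : realType.
Notation M3 := 'M[R]_3.

Lemma stab11 (h : M3) : Gstab (pt (w0 R) (z1 R) (nmat 1 1 0)) h <-> h = 1%:M.
Proof.
rewrite stab_iff; split.
  move=> [a [b [c [H -> Hx Hy]]]]; rewrite !mulr1 in Hx Hy; subst b c.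
  have E : (a - 1) * (a^+2 + a + 1) = a*a*a - 1 by ring.
  rewrite H subrr in E; move/eqP: E; rewrite mulf_eq0 => /orP[/eqP E|/eqP E].
    have -> : a = 1 by rewrite -[a]subr0 -E; ring.
    by rewrite mk1.
  by exfalso; nra.
move=> ->; exists 1, 1, 1; split => //; first by rewrite !mulr1.
exact: mk1.
Qed.

Lemma stab10 (h : M3) : Gstab (pt (w0 R) (z1 R) (nmat 1 0 0)) h <->
  exists a : R, a != 0 /\ h = dmat a a (a ^- 2).
Proof.
rewrite stab_iff; split.
  move=> [a [b [c [H -> Hx Hy]]]]; rewrite !mulr1 in Hx; subst b.
  have [a0 _ _] := nz3 H.
  exists a; split => //; rewrite dmatE; congr mk.
  apply: (mulfI (mulf_neq0 a0 a0)); transitivity (1 : R); [rewrite -H; ring | fld].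
move=> [a [a0 ->]]; exists a, a, (a ^- 2); split; rewrite ?mulr0 //.
by fld.
Qed.

Lemma stab01 (h : M3) : Gstab (pt (w0 R) (z1 R) (nmat 0 1 0)) h <->
  exists a : R, a != 0 /\ h = dmat a (a ^- 2) a.
Proof.
rewrite stab_iff; split.
  move=> [a [b [c [H -> Hx Hy]]]]; rewrite !mulr1 in Hy; subst c.
  have [a0 _ _] := nz3 H.
  exists a; split => //; rewrite dmatE; congr mk.
  apply: (mulfI (mulf_neq0 a0 a0)); transitivity (1 : R); [rewrite -H; ring | fld].
move=> [a [a0 ->]]; exists a, (a ^- 2), a; split; rewrite ?mulr0 //.
by fld.
Qed.

Lemma stab00 (h : M3) : Gstab (pt (w0 R) (z1 R) (nmat 0 0 0)) h <-> inD h.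
Proof.
rewrite stab_iff; split.
  move=> [a [b [c [H -> Hx Hy]]]]; split.
    by apply/inG_mk; apply: (eq_trans _ H); ring.
  move=> r s; rewrite !mxE.
  by case: r => [[|[|[|r]]] Hr] //; case: s => [[|[|[|s]]] Hs].
case: (mk_surj h) => a [b [c [d [e [f [g [k [i ->]]]]]]]].
move=> [/inG_mk G O].
have := O o0 o1 isT; have := O o0 o2 isT; have := O o1 o0 isT;
have := O o1 o2 isT; have := O o2 o0 isT; have := O o2 o1 isT.
rewrite !mxE /= => E1 E2 E3 E4 E5 E6; subst.
exists a, e, i; split; rewrite ?mulr0 //.
by rewrite -G; ring.
Qed.
End C.

Section D.
Set Implicit Arguments. Unset Strict Implicit.
Variable R : realType.
Notation M3 := 'M[R]_3.

Lemma orb_sch (X Y : R) y : Gorbit (pt (w0 R) (z1 R) (nmat X Y 0)) y -> Schubert (w0 R) (z1 R) y.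
Proof.
move=> [h [Gh S]]; exists h, 1%:M, (nmat X Y 0); split => //.
- exact: P1.
- exact: P_nmat.
by move: S; rewrite /Gact /pt /t1 /t2 /t3 /= mul1mx mulmx1.
Qed.

Lemma detP (p : M3) : inP p -> \det p = 1.
Proof. by case. Qed.

Lemma sch_orb y : Schubert (w0 R) (z1 R) y -> exists X Y : R,
  [/\ X = 0 \/ X = 1, Y = 0 \/ Y = 1 & Gorbit (pt (w0 R) (z1 R) (nmat X Y 0)) y].
Proof.
move=> [h [p [q [Gh Pp Pq S]]]].
have [X [Y [m [HX HY Pm Sm]]]] := sch_orbit Pp Pq.
exists X, Y; split => //; exists (m *m h); split.
  by rewrite /inG det_mulmx detP // Gh mulr1.
rewrite -Gact_comp; apply: sp_trans (sp_mulr h Sm) _.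
by move: S; rewrite /Gact /= mul1mx.
Qed.

Lemma orb_disj (X Y X' Y' : R) y : Gorbit (pt (w0 R) (z1 R) (nmat X Y 0)) y ->
  Gorbit (pt (w0 R) (z1 R) (nmat X' Y' 0)) y ->
  exists a b c : R, [/\ a*b*c = 1, a*X' = b*X & a*Y' = c*Y].
Proof.
move=> [h [Gh S]] [h' [Gh' S']].
have U : h' \in unitmx by rewrite unitmxE Gh' unitr1.
have S2 := sp_mulr (invmx h') (sp_trans S (sp_sym S')).
rewrite !Gact_comp mulmxV // Gact1 in S2.
have G2 : inG (h *m invmx h') by rewrite /inG det_mulmx det_inv Gh Gh' invr1 mulr1.
have [a [b [c [H _ Hx Hy]]]] := key_fwd G2 S2.
by exists a, b, c.
Qed.
End D.

Import numFieldNormedType.Exports.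

Section F.
Set Implicit Arguments. Unset Strict Implicit.
Variable R : realType.
Notation M3 := 'M[R]_3.

Lemma ord3 (i : 'I_3) : [\/ i = o0, i = o1 | i = o2].
Proof.
by case: i => [[|[|[|i]]] Hi]; [constructor 1|constructor 2|constructor 3|];
  rewrite // /o0 /o1 /o2; apply: val_inj.
Qed.

Lemma is_derive_expl (u : R) : is_derive (0:R) 1 (fun t : R => expR (u * t)) u.
Proof.
have h1 : is_derive (0:R) 1 (fun t : R => u * t) u.
  have h0 := is_deriveZ u (is_derive_id (0:R) (1:R)).
  have -> : (fun t : R => u * t) = (u \*: id)%R by apply/funext.
  by rewrite -[X in is_derive _ _ _ X]mulr1.
have := is_derive1_comp (is_derive_expR (u * 0)) h1.
by rewrite mulr0 expR0 mul1r.
Qed.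

Lemma derive_near_cst (f : R -> R) (k : R) : (\forall t \near 0, f t = k) -> 'D_1 f 0 = 0.
Proof.
move=> H; rewrite (@near_eq_derive _ _ _ f (cst k)) ?derive_cst //.
Qed.

Lemma tan_fwd (x y : R) (X : M3) :
  tangent_space (Gstab (pt (w0 R) (z1 R) (nmat x y 0))) X ->
  exists u v w, [/\ u + v + w = 0, X = mk u 0 0 0 v 0 0 0 w, x*(v-u) = 0 & y*(w-u) = 0].
Proof.
move=> [c [c0 Hn Hd HD]].
pose f i j (t : R) := c t i j.
have fd i j : derivable (f i j) 0 1 by move/derivable_mxP: Hd; apply.
have f0 i j : f i j 0 = (1%:M : M3) i j by rewrite /f c0.
have HX : X = \matrix_(i, j) 'D_1 (f i j) 0 by rewrite -HD derive_mx.
have Hs : \forall t \near 0, exists a b c', [/\ a*b*c' = 1,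
    c t = mk a 0 0 0 b 0 0 0 c', a*x = b*x & a*y = c'*y].
  by apply: filterS Hn => t /stab_iff.
have offd i j : i != j -> 'D_1 (f i j) 0 = 0.
  move=> ij; apply: (@derive_near_cst _ 0); apply: filterS Hs => t [a [b [c' [_ E _ _]]]].
  rewrite /f E mxE.
  by case: i ij => [[|[|[|i]]] Hi]; case: j => [[|[|[|j]]] Hj].
have Htr : 'D_1 (f o0 o0 * f o1 o1 * f o2 o2) 0 = 0.
  apply: (@derive_near_cst _ 1); apply: filterS Hs => t [a [b [c' [H E _ _]]]].
  by rewrite !fctE /f E !mxE /=; rewrite H.
rewrite (deriveM (derivableM (fd o0 o0) (fd o1 o1)) (fd o2 o2)) in Htr.
rewrite (deriveM (fd o0 o0) (fd o1 o1)) !fctE /= !f0 !mxE /= in Htr.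
have Hx : x * ('D_1 (f o1 o1) 0 - 'D_1 (f o0 o0) 0) = 0.
  have [->|x0] := eqVneq x 0; first by rewrite mul0r.
  rewrite (@near_eq_derive _ _ _ (f o1 o1) (f o0 o0)) ?subrr ?mulr0 //.
  apply: filterS Hs => t [a [b [c' [H E Ex _]]]].
  rewrite /f E !mxE /=; apply/esym; apply: (mulIf x0); exact: Ex.
have Hy : y * ('D_1 (f o2 o2) 0 - 'D_1 (f o0 o0) 0) = 0.
  have [->|y0] := eqVneq y 0; first by rewrite mul0r.
  rewrite (@near_eq_derive _ _ _ (f o2 o2) (f o0 o0)) ?subrr ?mulr0 //.
  apply: filterS Hs => t [a [b [c' [H E _ Ey]]]].
  rewrite /f E !mxE /=; apply/esym; apply: (mulIf y0); exact: Ey.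
exists ('D_1 (f o0 o0) 0), ('D_1 (f o1 o1) 0), ('D_1 (f o2 o2) 0); split.
- by rewrite mulr1 !scale1r in Htr; lra.
- rewrite HX; apply/matrixP => i j.
  by case: (ord3 i) => ->; case: (ord3 j) => ->; rewrite !mxE //=; apply: offd.
- exact: Hx.
- exact: Hy.
Qed.

Lemma tan_bwd (x y u v w : R) : u + v + w = 0 -> x*(v-u) = 0 -> y*(w-u) = 0 ->
  tangent_space (Gstab (pt (w0 R) (z1 R) (nmat x y 0))) (mk u 0 0 0 v 0 0 0 w).
Proof.
move=> H Hx Hy.
pose X : M3 := mk u 0 0 0 v 0 0 0 w.
pose c (t : R) : M3 := \matrix_(i, j) if i == j then expR (X i i * t) else 0.
have cf i j : (fun t => c t i j) = if i == j then (fun t => expR (X i i * t)) else (fun _ => 0).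
  by apply/funext => t; rewrite /c mxE; case: (i == j).
have cmk t : c t = mk (expR (u*t)) 0 0 0 (expR (v*t)) 0 0 0 (expR (w*t)).
  by apply/matrixP => i j; case: (ord3 i) => ->; case: (ord3 j) => ->; rewrite !mxE.
have cd : derivable c 0 1.
  apply/derivable_mxP => i j; rewrite cf; case: (i == j).
    by have [] := is_derive_expl (X i i).
  exact: derivable_cst.
exists c; split => //.
- by rewrite cmk !mulr0 expR0 mk1.
- apply: filterE => t; rewrite cmk; apply/stab_iff.
  exists (expR (u*t)), (expR (v*t)), (expR (w*t)); split => //.
  + by rewrite -!expRD -!mulrDl H mul0r expR0.
  + have [->|x0] := eqVneq x 0; first by rewrite !mulr0.
    by move/eqP: Hx; rewrite mulf_eq0 (negbTE x0) /= subr_eq0 => /eqP ->.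
  + have [->|y0] := eqVneq y 0; first by rewrite !mulr0.
    by move/eqP: Hy; rewrite mulf_eq0 (negbTE y0) /= subr_eq0 => /eqP ->.
- rewrite derive_mx //; apply/matrixP => i j; rewrite mxE cf.
  case: eqP => [<-|ij].
    by rewrite (@derive_val _ _ _ _ _ _ _ (is_derive_expl _)).
  rewrite derive_cst.
  by move: ij; case: (ord3 i) => ->; case: (ord3 j) => ->; rewrite !mxE.
Qed.

Lemma mk_scale k a b c d e f g h i : k *: mk a b c d e f g h i =
  mk (k*a) (k*b) (k*c) (k*d) (k*e) (k*f) (k*g) (k*h) (k*i) :> M3.
Proof. by apply/matrixP => r s; case: (ord3 r) => ->; case: (ord3 s) => ->; rewrite !mxE. Qed.

Lemma mk_add a b c d e f g h i a' b' c' d' e' f' g' h' i' :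
  mk a b c d e f g h i + mk a' b' c' d' e' f' g' h' i' =
  mk (a+a') (b+b') (c+c') (d+d') (e+e') (f+f') (g+g') (h+h') (i+i') :> M3.
Proof. by apply/matrixP => r s; case: (ord3 r) => ->; case: (ord3 s) => ->; rewrite !mxE. Qed.

Lemma mk0 : mk 0 0 0 0 0 0 0 0 0 = 0 :> M3.
Proof. by apply/matrixP => r s; case: (ord3 r) => ->; case: (ord3 s) => ->; rewrite !mxE. Qed.

Lemma sc1 (D : 'M[R]_1) (Y : M3) : D *m mxvec Y = mxvec (D 0 0 *: Y).
Proof. by rewrite {1}(mx11_scalar D) mul_scalar_mx linearZ. Qed.

Lemma sc2 (D : 'M[R]_(1, 1 + 1)) (Y1 Y2 : M3) :
  D *m col_mx (mxvec Y1) (mxvec Y2) = mxvec (lsubmx D 0 0 *: Y1 + rsubmx D 0 0 *: Y2).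
Proof. by rewrite -{1}[D]hsubmxK mul_row_col !sc1 linearD. Qed.

Lemma mxvec_inj m n : injective (@mxvec R m n).
Proof. exact: can_inj (@mxvecK _ _ _). Qed.

Lemma dim11 : orbit_dim (pt (w0 R) (z1 R) (nmat 1 1 0)) 8.
Proof.
split => //; exists 0; split; first by rewrite /row_free mxrank0.
move=> X; split.
  move/tan_fwd => [u [v [w [H -> Hx Hy]]]].
  rewrite !mul1r in Hx Hy.
  have [-> -> ->] : [/\ u = 0, v = 0 & w = 0] by split; lra.
  by rewrite mk0 linear0 sub0mx.
move/submx0null/eqP; rewrite mxvec_eq0 => /eqP ->.
rewrite -mk0; apply: tan_bwd; ring.
Qed.

Lemma dim1 (x y p q : R) (Y : M3) : Y = mk 1 0 0 0 p 0 0 0 q -> 1 + p + q = 0 ->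
  (forall u v w, u + v + w = 0 -> x*(v-u) = 0 -> y*(w-u) = 0 -> v = p * u /\ w = q * u) ->
  x * (p - 1) = 0 -> y * (q - 1) = 0 ->
  orbit_dim (pt (w0 R) (z1 R) (nmat x y 0)) 7.
Proof.
move=> EY Hpq Hsol Hx Hy.
split => //; exists (mxvec Y); split.
  apply: inj_row_free => D; rewrite sc1 => /eqP; rewrite mxvec_eq0 EY mk_scale => /eqP.
  rewrite -mk0 => /mk_inj [[E _ _ _ _] _].
  by apply/matrixP => i j; rewrite !ord1 mxE -E mulr1.
move=> X; split.
  move/tan_fwd => [u [v [w [H -> Hx' Hy']]]].
  have [-> ->] := Hsol u v w H Hx' Hy'.
  apply/submxP; exists (u%:M); rewrite sc1 mxE /= mulr1n EY mk_scale.
  by congr mxvec; apply: mk_eq; ring.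
move/submxP => [D]; rewrite sc1 => /mxvec_inj ->; rewrite EY mk_scale.
rewrite !mulr0 mulr1; apply: tan_bwd.
- by rewrite -[RHS](mulr0 (D 0 0)) -Hpq; ring.
- by rewrite -[RHS](mulr0 (D 0 0)) -Hx; ring.
- by rewrite -[RHS](mulr0 (D 0 0)) -Hy; ring.
Qed.

Lemma dim10 : orbit_dim (pt (w0 R) (z1 R) (nmat 1 0 0)) 7.
Proof.
apply: (@dim1 1 0 1 (-2) (mk 1 0 0 0 1 0 0 0 (-2))) => //; try ring.
move=> u v w H Hx _; rewrite mul1r in Hx; split; lra.
Qed.

Lemma dim01 : orbit_dim (pt (w0 R) (z1 R) (nmat 0 1 0)) 7.
Proof.
apply: (@dim1 0 1 (-2) 1 (mk 1 0 0 0 (-2) 0 0 0 1)) => //; try ring.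
move=> u v w H _ Hy; rewrite mul1r in Hy; split; lra.
Qed.

Lemma dim00 : orbit_dim (pt (w0 R) (z1 R) (nmat 0 0 0)) 6.
Proof.
split => //.
exists (col_mx (mxvec (mk 1 0 0 0 0 0 0 0 (-1))) (mxvec (mk 0 0 0 0 1 0 0 0 (-1)))).
split.
  apply: inj_row_free => D; rewrite sc2 => /eqP; rewrite mxvec_eq0 !mk_scale mk_add => /eqP.
  rewrite -mk0 => /mk_inj [[E1 _ _ _ E2] _].
  apply/matrixP => i j; rewrite !ord1 mxE.
  move: E1 E2; rewrite !mxE !mulr1 !mulr0 addr0 add0r.
  by case: j => [[|[|j]] Hj] // E1 E2; [rewrite -E1 | rewrite -E2];
    congr (D _ _); apply: val_inj.
move=> X; split.
  move/tan_fwd => [u [v [w [H -> _ _]]]].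
  apply/submxP; exists (row_mx u%:M v%:M); rewrite sc2 row_mxKl row_mxKr !mxE /= !mulr1n.
  rewrite !mk_scale mk_add; congr mxvec; apply: mk_eq; lra.
move/submxP => [D]; rewrite sc2 => /mxvec_inj ->; rewrite !mk_scale mk_add.
rewrite !mulr0 !mulr1 !addr0 !add0r; apply: tan_bwd; ring.
Qed.
End F.

Theorem mainTheorem6 (R : realType) :
  let n11 := nmat 1 1 0 in let n10 := nmat 1 0 0 in
  let n01 := nmat 0 1 0 in let n00 := nmat (0 : R) 0 0 in
  let ns : seq 'M[R]_3 := [:: n11; n10; n01; n00] in
  let x (k : 'I_4) := pt (w0 R) (z1 R) (nth 0 ns k) in
  (* S_{w0,z1} is the union of the four orbits ... *)
  (forall y, Schubert (w0 R) (z1 R) y <-> exists k : 'I_4, Gorbit (x k) y) /\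
  (* ... which are pairwise disjoint *)
  (forall (k l : 'I_4) y, Gorbit (x k) y -> Gorbit (x l) y -> k = l) /\
  (* n = n(1,1,0): dimension 8, trivial stabilizer *)
  (orbit_dim (pt (w0 R) (z1 R) n11) 8 /\
   forall h, Gstab (pt (w0 R) (z1 R) n11) h <-> h = 1%:M) /\
  (* n = n(1,0,0): dimension 7, stabilizer {d(a,a,1/a^2)} *)
  (orbit_dim (pt (w0 R) (z1 R) n10) 7 /\
   forall h, Gstab (pt (w0 R) (z1 R) n10) h <->
     exists a : R, a != 0 /\ h = dmat a a (a ^- 2)) /\
  (* n = n(0,1,0): dimension 7, stabilizer {d(a,1/a^2,a)} *)
  (orbit_dim (pt (w0 R) (z1 R) n01) 7 /\
   forall h, Gstab (pt (w0 R) (z1 R) n01) h <->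
     exists a : R, a != 0 /\ h = dmat a (a ^- 2) a) /\
  (* n = n(0,0,0): dimension 6, stabilizer D *)
  (orbit_dim (pt (w0 R) (z1 R) n00) 6 /\
   forall h, Gstab (pt (w0 R) (z1 R) n00) h <-> inD h).
Proof.
move=> n11 n10 n01 n00 ns x.
split.
  move=> y; split.
    move/sch_orb => [X [Y [HX HY G]]].
    case: HX => EX; case: HY => EY; subst X Y.
    - by exists (@Ordinal 4 3 isT).
    - by exists (@Ordinal 4 2 isT).
    - by exists (@Ordinal 4 1 isT).
    - by exists (@Ordinal 4 0 isT).
  by move=> [[[|[|[|[|k]]]] Hk] G] //; apply: orb_sch G.
split.
  move=> [[|[|[|[|k]]]] Hk] // [[|[|[|[|l]]]] Hl] // y G1 G2;
  try (by apply: val_inj);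
  have [a [b [c [H Hx Hy]]]] := orb_disj G1 G2; have [a0 b0 c0] := nz3 H;
  exfalso; rewrite ?(mulr0, mulr1) in Hx Hy;
  move: a0 b0 c0; rewrite !neq_lt => /orP[?|?] /orP[?|?] /orP[?|?]; lra.
split; first by split; [exact: dim11 | exact: stab11].
split; first by split; [exact: dim10 | exact: stab10].
split; first by split; [exact: dim01 | exact: stab01].
by split; [exact: dim00 | exact: stab00].
Qed.
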